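(* For every even integer $s\ge4$ there exists a linear $(2,s-1,s,2)$-AONT.
   Context: A linear $(t_i,t_o,s,q)$-AONT is given by an invertible $s\times s$ matrix $M$ over $\mathbb{F}_q$ defining the map $\mathbf{x}\mapsto\mathbf{y}=\mathbf{x}M^{-1}$ on row vectors of $\mathbb{F}_q^s$, such that for every set $I$ of $t_i$ input coordinates and every set $J$ of $s-t_o$ output coordinates, the pair $((x_i)_{i\in I},(y_j)_{j\in J})$ takes every value in $\mathbb{F}_q^{t_i+s-t_o}$ equally often as $\mathbf{x}$ ranges over $\mathbb{F}_q^s$. Equivalently, $M$ is invertible and every $t_o\times t_i$ submatrix of $M$ has rank $t_i$. *)

(* Defs.v *)
From mathcomp Require Import all_boot all_algebra.
Set Implicit Arguments. Unset Strict Implicit. Unset Printing Implicit Defensive.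
Local Open Scope ring_scope.

(* A linear (t_i, t_o, s, q)-AONT over the field F (with #|F| = q) is given by
   an invertible s x s matrix M such that every t_o x t_i submatrix of M
   (choose t_o distinct rows and t_i distinct columns) has rank t_i. *)
Definition linear_AONT (F : fieldType) (ti to s : nat) (M : 'M[F]_s) : Prop :=
  M \in unitmx /\
  forall (r : 'I_to -> 'I_s) (c : 'I_ti -> 'I_s),
    injective r -> injective c ->
    \rank (mxsub r c M) = ti.

(* Main.v *)
Require Import Defs.
From mathcomp Require Import all_boot all_algebra.
From mathcomp Require Import zify.
Import GRing.Theory.
Local Open Scope ring_scope.

Lemma F2_nat_even (n : nat) : ~~ odd n -> (n%:R : 'F_2) = 0.
Proof.
move=> ho; rewrite -(Fp_nat_mod (p:=2)) // modn2.
by rewrite (negbTE ho).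
Qed.

Lemma rank2_of (m : nat) (A : 'M['F_2]_(m, 2)) :
  (forall u : 'rV['F_2]_2, u *m A^T = 0 -> u = 0) -> \rank A = 2%N.
Proof.
move=> H; rewrite -mxrank_tr; apply/eqP; rewrite eqn_leq rank_leq_row /=.
rewrite row_leq_rank -kermx_eq0; apply/eqP/row_matrixP => i.
rewrite row0; apply: H.
by apply/sub_kermxP; apply: row_sub.
Qed.

Theorem mainTheorem13 (s : nat) :
  (4 <= s)%N -> ~~ odd s ->
  exists M : 'M['F_2]_s, linear_AONT 2 s.-1 M.
Proof.
move=> s4 hev.
pose J : 'M['F_2]_s := const_mx 1.
exists (J - 1%:M); split.
  suff HM : (J - 1%:M) *m (J - 1%:M) = 1%:M by case: (mulmx1_unit HM).
  have JJ : J *m J = 0.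
    apply/matrixP => i j; rewrite !mxE.
    under eq_bigr do rewrite !mxE mulr1.
    by rewrite sumr_const card_ord F2_nat_even.
  have J2 : J + J = 0.
    apply/matrixP => i j; rewrite !mxE.
    by rewrite -mulr2n -[1 *+ 2]/(2%:R) F2_nat_even.
  rewrite mulmxBl !mulmxBr JJ mulmx1 mul1mx mulmx1 sub0r.
  by rewrite opprB addrC -addrA -opprD J2 oppr0 addr0.
move=> r c rinj cinj; apply: rank2_of => u Hu.
pose i0 : 'I_2 := ord0. pose i1 : 'I_2 := lift ord0 ord0.
have Hk : forall k, u 0 i0 * (1 - (r k == c i0)%:R) + u 0 i1 * (1 - (r k == c i1)%:R) = 0.
  move=> k; have /matrixP/(_ 0 k) := Hu.
  by rewrite !mxE big_ord_recl big_ord1 /= !mxE.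
have c01 : c i0 != c i1 by apply/eqP => /cinj.
pose S := [set c i0; c i1].
have cardS : #|S| = 2%N by rewrite cards2 c01.
have cardI : #|[set r k | k in 'I_s.-1]| = s.-1 by rewrite card_imset // card_ord.
have [k1 k1S] : exists k, r k \in S.
  apply/existsP; apply: contraT; rewrite negb_exists => /forallP Hn.
  have : [set r k | k in 'I_s.-1] \subset ~: S.
    apply/subsetP => x /imsetP [k _ ->]; rewrite inE; exact: Hn.
  move/subset_leq_card; rewrite cardI; have := cardsC S; rewrite cardS card_ord.
  lia.
have [k2 k2S] : exists k, r k \notin S.
  apply/existsP; apply: contraT; rewrite negb_exists => /forallP Hn.
  have : [set r k | k in 'I_s.-1] \subset S.
    apply/subsetP => x /imsetP [k _ ->]; have := Hn k; by rewrite negbK.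
  move/subset_leq_card; rewrite cardI cardS.
  lia.
have E2 := Hk k2; move: k2S; rewrite !inE negb_or => /andP[/negbTE e1 /negbTE e2].
rewrite e1 e2 in E2.
rewrite !subr0 !mulr1 in E2.
have fin : u 0 i0 = 0 -> u 0 i1 = 0 -> u = 0.
  move=> h0 h1; apply/rowP => i; rewrite mxE.
  case: (unliftP ord0 i) => [j ->|->] //.
  by rewrite (ord1 j).
have E1 := Hk k1; move: k1S; rewrite !inE => /orP[] /eqP e; rewrite e in E1.
  rewrite eqxx (negbTE c01) subrr subr0 mulr0 mulr1 add0r in E1.
  rewrite E1 addr0 in E2.
  exact: fin.
rewrite eqxx eq_sym (negbTE c01) subrr subr0 mulr0 mulr1 addr0 in E1.
rewrite E1 add0r in E2.
exact: fin.
Qed.
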